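(* Let $r\ge2$ and suppose that $w^\ast(r-1,3)$ exists but $w^\ast(r,3)$ does not exist. Then there exists an infinite word $d_1d_2d_3\cdots$ over a finite set of positive integers that contains no additive square, i.e. there are no $m\ge0$, $\ell\ge1$ with $\sum_{i=m+1}^{m+\ell}d_i=\sum_{i=m+\ell+1}^{m+2\ell}d_i$.
   Context: An increasing sequence of positive integers $a_1<a_2<\cdots$ contains a double $k$-term arithmetic progression if there are indices $p_1<\cdots<p_k$ such that both $\{p_1,\dots,p_k\}$ and $\{a_{p_1},\dots,a_{p_k}\}$ are arithmetic progressions. For an $r$-coloring of an interval, each color class is regarded as an increasing sequence by listing its elements in increasing order; a monochromatic double $k$-term arithmetic progression is a double $k$-term arithmetic progression in some color class. For integers $r,k\ge1$, $w^\ast(r,k)$ denotes the least integer $N$, if it exists, such that every $r$-coloring of $[1,N]=\{1,\dots,N\}$ has a monochromatic double $k$-term arithmetic progression. An additive square in a word $x_1x_2\cdots$ of integers is a pair of adjacent factors (blocks of consecutive letters) of the same length and the same sum. *)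

(* Defs.v *)
From mathcomp Require Import all_boot.
Set Implicit Arguments. Unset Strict Implicit. Unset Printing Implicit Defensive.

Definition has_double_AP (k : nat) (s : seq nat) : Prop :=
  exists p d e : nat, 0 < d /\ p + k.-1 * d < size s /\
    forall i, i < k -> nth 0 s (p + i * d) = nth 0 s p + i * e.

Definition color_class (r N : nat) (c : nat -> 'I_r) (j : 'I_r) : seq nat :=
  [seq x <- iota 1 N | c x == j].

Definition mono_dAP_forced (r k N : nat) : Prop :=
  forall c : nat -> 'I_r, exists j : 'I_r, has_double_AP k (color_class N c j).

Definition wstar_exists (r k : nat) : Prop := exists N : nat, mono_dAP_forced r k N.

(* The word d_1 d_2 ... (d : nat -> nat, d 0 unused) has no additive square. *)
Definition additive_square_free (d : nat -> nat) : Prop :=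
  forall m l : nat, 0 < l ->
    \sum_(m.+1 <= i < (m + l).+1) d i <> \sum_((m + l).+1 <= i < (m + 2 * l).+1) d i.

(* Main.v *)
Require Import Defs.
From mathcomp Require Import all_boot zify.
From Stdlib Require Import Classical ClassicalEpsilon.
Set Implicit Arguments. Unset Strict Implicit. Unset Printing Implicit Defensive.

Definition asf_fin (w : seq nat) := forall m l, 0 < l -> m + 2 * l <= size w ->
  \sum_(m <= i < m + l) nth 0 w i <> \sum_(m + l <= i < m + 2 * l) nth 0 w i.
Definition good N w := asf_fin w /\ all (fun x => 0 < x <= N) w.
Definition ext N w := forall L, exists v, good N (w ++ v) /\ L <= size v.

Lemma good_prefix N w v : good N (w ++ v) -> good N w.
Proof.
move=> [Ha Hall]; split; last by move: Hall; rewrite all_cat => /andP[].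
move=> m l l0 hs E; apply: (Ha m l l0); first by rewrite size_cat; lia.
rewrite (eq_big_nat _ _ (F2 := fun i => nth 0 w i)); last first.
  by move=> i /andP[_ hi]; rewrite nth_cat; have -> : i < size w by lia.
rewrite [in RHS](eq_big_nat _ _ (F2 := fun i => nth 0 w i)) //.
by move=> i /andP[_ hi]; rewrite nth_cat; have -> : i < size w by lia.
Qed.

Lemma ext_step N w : ext N w -> exists x, ext N (rcons w x).
Proof.
move=> He; apply: NNPP => Hn.
have Hb : forall x, exists B, forall v, good N (rcons w x ++ v) -> size v < B.
  move=> x; have : ~ ext N (rcons w x) by move=> H; apply: Hn; exists x.
  move=> /not_all_ex_not [B HB]; exists B => v hv.
  rewrite ltnNge; apply/negP => hB; apply: HB; by exists v.
have Hk : forall k, exists B, forall x, x <= k -> forall v,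
    good N (rcons w x ++ v) -> size v < B.
  elim=> [|k [B IH]].
    have [B HB] := Hb 0; exists B => x hx; have -> : x = 0 by lia. exact: HB.
  have [B' HB'] := Hb k.+1; exists (maxn B B') => x hx v hv.
  rewrite leq_eqVlt in hx; case/orP: hx => [/eqP Ex | hx].
    rewrite Ex in hv; have := HB' v hv; lia.
  have := IH x hx v hv; lia.
have [B HB] := Hk N.
have [v [hv hs]] := He B.+1.
case: v hv hs => [//|x v] hv hs.
have hx : x <= N.
  by case: hv => _; rewrite all_cat /= => /and3P[_ /andP[]].
rewrite /= in hs; have := HB x hx v; rewrite cat_rcons => /(_ hv); lia.
Qed.

Section Seq.
Variable N : nat.
Definition nxt (w : seq nat) : nat := epsilon (inhabits 0) (fun x => ext N (rcons w x)).
Fixpoint pref n : seq nat := if n is n'.+1 then rcons (pref n') (nxt (pref n')) else [::].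

Lemma pref_ext n : ext N [::] -> ext N (pref n).
Proof.
move=> H0; elim: n => [//|n IH] /=.
have [x hx] := ext_step IH.
exact: (epsilon_spec (inhabits 0) (fun x => ext N (rcons (pref n) x)) (ex_intro _ x hx)).
Qed.

Lemma size_pref n : size (pref n) = n.
Proof. by elim: n => //= n IH; rewrite size_rcons IH. Qed.

Lemma pref_nth n m k : k < n -> n <= m -> nth 0 (pref m) k = nth 0 (pref n) k.
Proof.
move=> hk; elim: m => [|m IH]; first by rewrite leqn0 => /eqP ->.
rewrite leq_eqVlt => /orP[/eqP -> //|hm].
have hkm : k < m by lia.
by rewrite /= nth_rcons size_pref hkm IH //; lia.
Qed.
End Seq.

Lemma compact N : ext N [::] -> exists (d : nat -> nat) (S : seq nat),
    (forall x, x \in S -> 0 < x) /\ (forall i, 0 < i -> d i \in S) /\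
    additive_square_free d.
Proof.
move=> H0.
have Hg : forall n, good N (pref N n).
  move=> n; have [v [hv _]] := pref_ext n H0 0; exact: good_prefix hv.
exists (fun i => nth 0 (pref N i) i.-1), (iota 1 N); split.
  by move=> x; rewrite mem_iota; lia.
split.
  move=> i hi; have [_ /allP Ha] := Hg i.
  have := Ha (nth 0 (pref N i) i.-1); rewrite mem_nth ?size_pref; last by lia.
  by move=> /(_ isT); rewrite mem_iota; lia.
move=> m l hl.
have [Ha _] := Hg (m + 2 * l).
have E : forall a b, m <= a -> b <= m + 2 * l ->
   \sum_(a.+1 <= i < b.+1) nth 0 (pref N i) i.-1 = \sum_(a <= i < b) nth 0 (pref N (m + 2 * l)) i.
  move=> a b ha hb; rewrite big_add1 /=.
  apply: eq_big_nat => i /andP[_ hi] /=.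
  by rewrite (@pref_nth N i.+1 (m + 2 * l)) //; lia.
rewrite E; [|lia|lia]. rewrite E; [|lia|lia].
apply: Ha => //; rewrite size_pref //.
Qed.

Lemma dAP_transfer a A C s' : has_double_AP 3 s' -> has_double_AP 3 (A ++ map (addn a) s' ++ C).
Proof.
move=> [p [d [e [hd [hs H]]]]].
exists (size A + p), d, e; split => //; split.
  rewrite !size_cat size_map /=; lia.
move=> i hi.
have E : forall q, q < size s' -> nth 0 (A ++ map (addn a) s' ++ C) (size A + q) = a + nth 0 s' q.
  move=> q hq; rewrite nth_cat ltnNge leq_addr /= addKn nth_cat size_map hq.
  by rewrite (nth_map 0).
have hid : i * d <= 2 * d by rewrite leq_mul2r; apply/orP; right; lia.
move: hs => /= hs.
rewrite -addnA E; last by lia.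
rewrite E; last by lia.
rewrite H //; lia.
Qed.

Lemma telescope (f : nat -> nat) k j : (forall i, k <= i < k + j -> f i <= f i.+1) ->
  \sum_(k <= i < k + j) (f i.+1 - f i) = f (k+j) - f k /\ f k <= f (k+j).
Proof.
elim: j => [|j IH] H; first by rewrite addn0 big_geq // subnn.
have [IH1 IH2] : \sum_(k <= i < k + j) (f i.+1 - f i) = f (k+j) - f k /\ f k <= f (k+j).
  by apply: IH => i hi; apply: H; lia.
have h3 := H (k + j); have h4 : f (k + j) <= f (k+j).+1 by apply: h3; lia.
rewrite addnS big_nat_recr /= ?IH1; last by lia.
split; lia.
Qed.

Lemma window n N0 M (c : nat -> 'I_n.+2) : mono_dAP_forced n.+1 3 N0 ->
  (forall j, ~ has_double_AP 3 (color_class M c j)) ->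
  forall a, a + N0 <= M -> exists x, a < x <= a + N0 /\ c x = ord_max.
Proof.
move=> HF Hc a haM; apply: NNPP => Hn.
have Hx : forall x, a < x <= a + N0 -> (c x : nat) < n.+1.
  move=> x hx; have := ltn_ord (c x); rewrite ltnS leq_eqVlt => /orP[/eqP E|//].
  exfalso; apply: Hn; exists x; split => //; apply: val_inj; by rewrite /= E.
pose c' := fun y => (inord (c (a + y)) : 'I_n.+1).
have [j' Hj'] := HF c'.
pose j := widen_ord (leqnSn n.+1) j'.
suff : has_double_AP 3 (color_class M c j) by move/(Hc j).
have -> : color_class M c j = [seq x <- iota 1 a | c x == j] ++
    map (addn a) (color_class N0 c' j') ++ [seq x <- iota (1 + a + N0) (M - a - N0) | c x == j].
  rewrite /color_class.
  have -> : M = a + (N0 + (M - a - N0)) by lia.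
  rewrite iotaD iotaD filter_cat filter_cat; congr (_ ++ (_ ++ _)); last first.
    congr filter; congr iota; lia.
  rewrite addnC iotaDl filter_map; congr map.
  apply: eq_in_filter => y; rewrite mem_iota => hy /=.
  have hv := Hx (a + y) ltac:(lia).
  apply/eqP/eqP => [E|E].
    apply: val_inj => /=; rewrite inordK //; by rewrite E.
  apply: val_inj => /=; rewrite -E /= inordK //.
exact: dAP_transfer.
Qed.

Lemma comb n N0 : mono_dAP_forced n.+1 3 N0 -> ~ wstar_exists n.+2 3 -> ext N0 [::].
Proof.
move=> HF HnW L.
pose M := L.+1 * N0.
have [c Hc] : exists c : nat -> 'I_n.+2, forall j, ~ has_double_AP 3 (color_class M c j).
  apply: NNPP => H; apply: HnW; exists M => c; apply: NNPP => H2; apply: H.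
  by exists c => j hj; apply: H2; exists j.
have W := window HF Hc.
pose s := color_class M c ord_max.
have Hsort : sorted ltn s := sorted_filter ltn_trans _ (iota_ltn_sorted 1 M).
have Hmem : forall x, (x \in s) = ((1 <= x <= M) && (c x == ord_max)).
  by move=> x; rewrite mem_filter mem_iota andbC; congr (_ && _); apply/idP/idP; lia.
have Hlt : forall i j, i < j -> j < size s -> nth 0 s i < nth 0 s j.
  move=> i j hij hj; apply: (sorted_ltn_nth ltn_trans 0 Hsort) => //; rewrite inE; lia.
have Hle : forall i j, i <= j -> j < size s -> nth 0 s i <= nth 0 s j.
  move=> i j; rewrite leq_eqVlt => /orP[/eqP -> //|hij] hj; apply: ltnW; exact: Hlt.
have Hsize : L.+1 <= size s.
  suff : forall k, k <= L.+1 -> k <= size (color_class (k * N0) c ord_max).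
    by move=> /(_ L.+1 (leqnn _)).
  elim => [//| k IH] hk.
  have hkM : k.+1 * N0 <= L.+1 * N0 by rewrite leq_mul2r hk orbT.
  rewrite mulSn addnC /color_class iotaD filter_cat size_cat.
  have [x [hx hcx]] := W (k * N0) ltac:(rewrite mulSn in hkM; lia).
  have hxin : x \in [seq y <- iota (1 + k * N0) N0 | c y == ord_max].
    rewrite mem_filter mem_iota hcx eqxx /=; lia.
  have : 0 < size [seq y <- iota (1 + k * N0) N0 | c y == ord_max].
    by rewrite -has_predT; apply/hasP; exists x.
  have := IH ltac:(lia); rewrite /color_class; lia.
pose w := mkseq (fun i => nth 0 s i.+1 - nth 0 s i) (size s).-1.
exists w; split; last by rewrite size_mkseq; lia.
rewrite cat0s; split.
  move=> m l hl; rewrite size_mkseq => hml E.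
  rewrite (_ : m + 2 * l = m + l + l) in E; last by lia.
  rewrite (eq_big_nat _ _ (F2 := fun i => nth 0 s i.+1 - nth 0 s i)) in E; last first.
    by move=> i hi; rewrite nth_mkseq //; lia.
  rewrite [in RHS](eq_big_nat _ _ (F2 := fun i => nth 0 s i.+1 - nth 0 s i)) in E; last first.
    by move=> i hi; rewrite nth_mkseq //; lia.
  have [T1 M1] := telescope (f := fun i => nth 0 s i) (k := m) (j := l)
     ltac:(by move=> i hi; apply: Hle; lia).
  have [T2 M2] := telescope (f := fun i => nth 0 s i) (k := m + l) (j := l)
     ltac:(by move=> i hi; apply: Hle; lia).
  rewrite T1 T2 in E.
  apply: (Hc ord_max); change (has_double_AP 3 s); exists m, l, (nth 0 s (m + l) - nth 0 s m); split => //; split.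
    rewrite /=; change (m + 2 * l < size s); lia.
  move=> [|[|[|i]]] //= _.
  - by rewrite mul0n !addn0.
  - by rewrite !mul1n; lia.
  - rewrite (_ : m + 2 * l = m + l + l); last by lia.
    lia.
apply/allP => x /(nthP 0) [i hi <-]; rewrite size_mkseq in hi; rewrite nth_mkseq //.
apply/andP; split; first by have := Hlt i i.+1 (ltnSn _) ltac:(lia); lia.
rewrite leqNgt; apply/negP => hgt.
have hsz : i.+1 < size s by move: hi; rewrite ltn_predRL.
have hi1 : nth 0 s i.+1 \in s by apply: mem_nth.
move: hi1; rewrite Hmem => /andP[hb _].
have [y [hy hcy]] := W (nth 0 s i) ltac:(lia).
have ys : y \in s.
  rewrite Hmem hcy eqxx andbT.
  have := Hle 0 i (leq0n _) ltac:(lia).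
  have : nth 0 s 0 \in s by apply: mem_nth; apply: leq_trans hsz.
  rewrite Hmem => /andP[h0 _]; lia.
have hk : index y s < size s by rewrite index_mem.
have nk := nth_index 0 ys.
case: (ltnP i (index y s)) => hik.
  have := Hle i.+1 (index y s) hik hk; rewrite nk; lia.
have := Hle (index y s) i hik ltac:(lia); rewrite nk; lia.
Qed.

Theorem mainTheorem2 (r : nat) :
  2 <= r -> wstar_exists r.-1 3 -> ~ wstar_exists r 3 ->
  exists (d : nat -> nat) (S : seq nat),
    (forall x, x \in S -> 0 < x) /\ (forall i, 0 < i -> d i \in S) /\
    additive_square_free d.
Proof.
case: r => [|[|n]] // _ H1 H2.
have [N0 HN] := H1.
exact: compact (comb HN H2).
Qed.
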